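(* Let $A$ be an irreducible $n\times n$ completely positive matrix with $\operatorname{rank}A=2$. Then $A$ has a unique CP factorization if and only if there exist indices $i\neq j$ with $a_{ij}=0$ such that the $i$-th row and the $j$-th column of $A$ are nonzero. If no such zero off-diagonal entry exists, then $A$ has infinitely many minimal CP factorizations.
   Context: A symmetric $n\times n$ matrix $A$ is completely positive if $A=BB^T$ for some entrywise nonnegative $n\times k$ matrix $B$; such an equality is a CP factorization of $A$. Only CP factorizations in which the columns of $B$ are pairwise linearly independent are considered, and two CP factorizations $A=BB^T=CC^T$ are considered equal if $C=BP$ for a permutation matrix $P$. The cp-rank of $A$ is the minimal number of columns of such a nonnegative $B$; a CP factorization with that many columns is called minimal. A symmetric matrix is irreducible if its graph (vertices $1,\dots,n$, with $\{i,j\}$, $i\ne j$, an edge iff $a_{ij}\neq0$) is connected. *)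

(* Defs.v *)
From HB Require Import structures.
From mathcomp Require Import all_boot all_order all_algebra.
From mathcomp Require Import reals.
Set Implicit Arguments. Unset Strict Implicit. Unset Printing Implicit Defensive.
Import Order.TTheory GRing.Theory Num.Theory.
Local Open Scope ring_scope.

Section CP.
Variable R : realType.

Definition nonneg_mx (n k : nat) (B : 'M[R]_(n, k)) : Prop :=
  forall i j, 0 <= B i j.

Definition completely_positive (n : nat) (A : 'M[R]_n) : Prop :=
  exists k (B : 'M[R]_(n, k)), nonneg_mx B /\ A = B *m B^T.

Definition pairwise_lin_indep_cols (n k : nat) (B : 'M[R]_(n, k)) : Prop :=
  forall j1 j2 : 'I_k, j1 != j2 ->
    forall a b : R, a *: col j1 B + b *: col j2 B = 0 -> a = 0 /\ b = 0.

Definition cp_factorization (n k : nat) (A : 'M[R]_n) (B : 'M[R]_(n, k)) : Prop :=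
  [/\ nonneg_mx B, A = B *m B^T & pairwise_lin_indep_cols B].

Definition cp_fact_eq (n k k' : nat) (B : 'M[R]_(n, k)) (C : 'M[R]_(n, k')) : Prop :=
  exists (e : k = k') (P : 'M[R]_k'),
    is_perm_mx P /\ C = castmx (erefl n, e) B *m P.

Definition unique_cp_factorization (n : nat) (A : 'M[R]_n) : Prop :=
  exists k (B : 'M[R]_(n, k)), cp_factorization A B /\
    forall k' (C : 'M[R]_(n, k')), cp_factorization A C -> cp_fact_eq B C.

(* minimal CP factorization: number of columns equals the cp-rank, i.e.
   no nonnegative factorization with fewer columns exists *)
Definition minimal_cp_factorization (n k : nat) (A : 'M[R]_n) (B : 'M[R]_(n, k)) : Prop :=
  cp_factorization A B /\
  forall k' (C : 'M[R]_(n, k')), (k' < k)%N -> nonneg_mx C -> A <> C *m C^T.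

Definition infinitely_many_minimal_cp (n : nat) (A : 'M[R]_n) : Prop :=
  exists k (f : nat -> 'M[R]_(n, k)),
    (forall m, minimal_cp_factorization A (f m)) /\
    (forall m1 m2, m1 <> m2 -> ~ cp_fact_eq (f m1) (f m2)).

Definition mx_graph (n : nat) (A : 'M[R]_n) : rel 'I_n :=
  fun i j => (i != j) && (A i j != 0).

Definition irreducible_mx (n : nat) (A : 'M[R]_n) : Prop :=
  forall i j : 'I_n, connect (mx_graph A) i j.

End CP.

(* Main.v *)
Require Import Defs.
From HB Require Import structures.
From mathcomp Require Import all_boot all_order all_algebra.
From mathcomp Require Import reals.
From mathcomp Require Import all_fingroup ring lra.
From Stdlib Require Import Classical.
Import Order.TTheory GRing.Theory Num.Theory.
Local Open Scope ring_scope.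


Lemma sum2 {R : realType} (F : 'I_2 -> R) : \sum_(i < 2) F i = F 0 + F 1.
Proof. rewrite big_ord_recl big_ord_recl big_ord0 addr0. congr (_ + F _); exact: val_inj. Qed.

Lemma mmT {R : realType} {n k : nat} (C : 'M[R]_(n,k)) a b :
  (C *m C^T) a b = \sum_l C a l * C b l.
Proof. by rewrite mxE; apply: eq_bigr => l _; rewrite mxE. Qed.

Lemma sumsq3 {R : realType} {n k : nat} (C : 'M[R]_(n,k)) m i j (x y : R) :
  let G := C *m C^T in
  \sum_l (C m l - x * C i l - y * C j l)^+2 =
  G m m - 2 * x * G m i - 2 * y * G m j + x^+2 * G i i + y^+2 * G j j
  + 2 * x * y * G i j.
Proof.
move=> G; rewrite /G !mmT !mulr_sumr -!sumrN -!big_split /=.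
by apply: eq_bigr => l _; ring.
Qed.


Definition Dt {R : realType} {n : nat} (A : 'M[R]_n) p q := A p p * A q q - A p q ^+ 2.
Definition Xc {R : realType} {n : nat} (A : 'M[R]_n) p q m :=
  (A m p * A q q - A m q * A p q) / Dt A p q.
Definition Yc {R : realType} {n : nat} (A : 'M[R]_n) p q m :=
  (A m q * A p p - A m p * A p q) / Dt A p q.

Lemma symE {R : realType} {n : nat} (A : 'M[R]_n) : A^T = A -> forall a b, A a b = A b a.
Proof. by move=> HT a b; rewrite -[in LHS]HT mxE. Qed.

Lemma sum_ind {R : realType} {n} (f : 'I_n -> R) p q (g h : R) : p != q ->
  \sum_l f l * ((l == p)%:R * g + (l == q)%:R * h) = f p * g + f q * h.
Proof.
move=> pq; rewrite (bigD1 p) //= (bigD1 q) 1?eq_sym //= big1; last first.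
  by move=> l /andP[lp lq]; rewrite (negbTE lp) (negbTE lq) !mul0r addr0 mulr0.
have qp : (q == p) = false by rewrite eq_sym (negbTE pq).
rewrite !eqxx ?qp ?(negbTE pq) /=; ring.
Qed.

Lemma ord2 (k : 'I_2) : k = 0 \/ k = 1.
Proof. case: k => [[|[|]]] // H; [left|right]; exact: val_inj. Qed.

Lemma span2 {R : realType} {n : nat} (A : 'M[R]_n) p q : A^T = A -> (\rank A <= 2)%N ->
  Dt A p q != 0 ->
  forall m l, A m l = Xc A p q m * A p l + Yc A p q m * A q l.
Proof.
move=> HT hr hD; have S := symE _ HT.
have pq : p != q by apply: contraNneq hD => ->; rewrite /Dt expr2 subrr.
pose R2 : 'M[R]_(2, n) := \matrix_(k < 2, l < n) (if k == 0 then A p l else A q l).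
pose g (a b : 'I_2) : R := (if a == 0 then (if b == 0 then A q q else - A p q)
   else (if b == 0 then - A p q else A p p)) / Dt A p q.
pose E : 'M[R]_(n, 2) := \matrix_(l, k) ((l == p)%:R * g 0 k + (l == q)%:R * g 1 k).
have RE : R2 *m E = 1%:M.
  apply/matrixP => a b; rewrite mxE.
  under eq_bigr => l _ do rewrite !mxE.
  rewrite (sum_ind (fun l => if a == 0 then A p l else A q l) _ _ _ _ pq) mxE /g.
  move: hD; rewrite /Dt => hD.
  by case: (ord2 a) => ->; case: (ord2 b) => -> /=; rewrite ?[A q p]S; field.
have r2 : \rank R2 = 2%N.
  apply/eqP; rewrite eqn_leq rank_leq_row /=.
  by rewrite -{1}(mxrank1 R 2) -RE mxrankM_maxl.
have sub : (R2 <= A)%MS.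
  apply/row_subP => k; have -> : row k R2 = row (if k == 0 then p else q) A.
    by apply/rowP => l; rewrite !mxE; case: ifP.
  exact: row_sub.
have AR : (A <= R2)%MS.
  by rewrite -(geq_leqif (mxrank_leqif_sup sub)) r2.
move=> m l.
have /submxP [D HD] : (row m A <= R2)%MS by apply: submx_trans (row_sub m A) AR.
have HA : forall l, A m l = D 0 0 * A p l + D 0 1 * A q l.
  by move=> l'; have := congr1 (fun M : 'M[R]_(1,n) => M 0 l') HD; rewrite /= !mxE sum2 !mxE /=.
move: hD; rewrite /Dt => hD.
have Hp := HA p; have Hq := HA q.
have -> : Xc A p q m = D 0 0 by rewrite /Xc /Dt Hp Hq [A q p]S; field.
have -> : Yc A p q m = D 0 1 by rewrite /Yc /Dt Hp Hq [A q p]S; field.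
exact: HA.
Qed.


Definition Bf {R : realType} {n : nat} (A : 'M[R]_n) p q (L : 'M[R]_2) : 'M[R]_(n,2) :=
  \matrix_(m, k) (Xc A p q m * L 0 k + Yc A p q m * L 1 k).

Lemma XYpq {R : realType} {n : nat} (A : 'M[R]_n) p q : A^T = A -> Dt A p q != 0 ->
  [/\ Xc A p q p = 1, Yc A p q p = 0, Xc A p q q = 0 & Yc A p q q = 1].
Proof.
move=> HT; have S := symE _ HT; rewrite /Xc /Yc /Dt => hD.
by split; rewrite ?[A q p]S; field.
Qed.

Lemma Bf_fact {R : realType} {n : nat} (A : 'M[R]_n) p q (L : 'M[R]_2) :
  A^T = A -> (\rank A <= 2)%N -> Dt A p q != 0 ->
  L 0 0 ^+ 2 + L 0 1 ^+ 2 = A p p -> L 0 0 * L 1 0 + L 0 1 * L 1 1 = A p q ->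
  L 1 0 ^+ 2 + L 1 1 ^+ 2 = A q q ->
  A = Bf A p q L *m (Bf A p q L)^T.
Proof.
move=> HT hr hD e1 e2 e3; have S := symE _ HT; have sp := @span2 _ _ A p q HT hr hD.
apply/matrixP => m l; rewrite mmT sum2 !mxE.
rewrite sp [A p l]S [A q l]S (sp l p) (sp l q) [A q p]S -e1 -e2 -e3.
set x := Xc A p q m; set y := Yc A p q m; set x' := Xc A p q l; set y' := Yc A p q l.
ring.
Qed.

Lemma solve2 {R : realType} (a b u1 v1 u2 v2 : R) : u1 * v2 - v1 * u2 != 0 ->
  a * u1 + b * v1 = 0 -> a * u2 + b * v2 = 0 -> a = 0 /\ b = 0.
Proof.
move=> hd e1 e2; split.
  have : a * (u1 * v2 - v1 * u2) = 0.
    have -> : a * (u1 * v2 - v1 * u2) = v2 * (a * u1 + b * v1) - v1 * (a * u2 + b * v2) by ring.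
    by rewrite e1 e2 !mulr0 subr0.
  by move/eqP; rewrite mulf_eq0 (negbTE hd) orbF => /eqP.
have : b * (u1 * v2 - v1 * u2) = 0.
  have -> : b * (u1 * v2 - v1 * u2) = u1 * (a * u2 + b * v2) - u2 * (a * u1 + b * v1) by ring.
  by rewrite e1 e2 !mulr0 subr0.
by move/eqP; rewrite mulf_eq0 (negbTE hd) orbF => /eqP.
Qed.

Lemma Bf_indep {R : realType} {n : nat} (A : 'M[R]_n) p q (L : 'M[R]_2) :
  A^T = A -> Dt A p q != 0 -> L 0 0 * L 1 1 - L 0 1 * L 1 0 != 0 ->
  pairwise_lin_indep_cols (Bf A p q L).
Proof.
move=> HT hD hL j1 j2 hj a b H.
have E r : a * Bf A p q L r j1 + b * Bf A p q L r j2 = 0.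
  by have := congr1 (fun M : 'M[R]_(n,1) => M r 0) H; rewrite !mxE.
have [xp yp xq yq] := @XYpq _ _ A p q HT hD.
have Ep := E p; have Eq := E q; rewrite !mxE xp yp xq yq in Ep Eq.
rewrite !mul1r !mul0r ?add0r ?addr0 in Ep Eq.
case: (ord2 j1) hj Ep Eq => ->; case: (ord2 j2) => -> //= _ Ep Eq.
  exact: solve2 hL Ep Eq.
apply: solve2 Ep Eq; rewrite -oppr_eq0 opprB; apply: contra hL => /eqP <-.
by apply/eqP; ring.
Qed.

Lemma Bf_nonneg {R : realType} {n : nat} (A : 'M[R]_n) p q (L : 'M[R]_2) :
  (forall m, 0 <= Xc A p q m) -> (forall m, 0 <= Yc A p q m) ->
  (forall a b, 0 <= L a b) -> nonneg_mx (Bf A p q L).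
Proof.
by move=> hx hy hl m k; rewrite mxE addr_ge0 // mulr_ge0.
Qed.


Definition cc {R : realType} (u : R) := (1 - u ^+ 2) / (1 + u ^+ 2).
Definition sn {R : realType} (u : R) := (2 * u) / (1 + u ^+ 2).
Definition ss {R : realType} {n : nat} (A : 'M[R]_n) p := Num.sqrt (A p p).
Definition rr {R : realType} {n : nat} (A : 'M[R]_n) p q := A p q / ss A p.
Definition tt {R : realType} {n : nat} (A : 'M[R]_n) p q :=
  Num.sqrt (A q q - rr A p q ^+ 2).
Definition Lmat {R : realType} {n : nat} (A : 'M[R]_n) p q (u : R) : 'M[R]_2 :=
  \matrix_(a < 2, b < 2)
   (if a == 0 then (if b == 0 then ss A p * cc u else ss A p * sn u)
    else (if b == 0 then rr A p q * cc u - tt A p q * sn u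
          else rr A p q * sn u + tt A p q * cc u)).

Lemma cs1 {R : realType} (u : R) : cc u ^+ 2 + sn u ^+ 2 = 1.
Proof.
rewrite /cc /sn; have h : 1 + u ^+ 2 != 0 by rewrite gt_eqF //; nra.
by field.
Qed.

Lemma Lmat_props {R : realType} {n : nat} (A : 'M[R]_n) p q (u : R) :
  0 < A p p -> 0 < Dt A p q ->
  let L := Lmat A p q u in
  [/\ L 0 0 ^+ 2 + L 0 1 ^+ 2 = A p p, L 0 0 * L 1 0 + L 0 1 * L 1 1 = A p q,
      L 1 0 ^+ 2 + L 1 1 ^+ 2 = A q q & L 0 0 * L 1 1 - L 0 1 * L 1 0 != 0].
Proof.
move=> hp hD L; rewrite /L !mxE /=.
have hs : ss A p ^+ 2 = A p p by rewrite /ss sqr_sqrtr // ltW.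
have hs0 : ss A p != 0 by rewrite /ss sqrtr_eq0 -ltNge.
have hr : rr A p q * ss A p = A p q by rewrite /rr divfK.
have ht0 : 0 < A q q - rr A p q ^+ 2.
  have -> : A q q - rr A p q ^+ 2 = Dt A p q / A p p.
    by rewrite /rr /Dt -hs; field.
  by rewrite divr_gt0.
have ht : tt A p q ^+ 2 = A q q - rr A p q ^+ 2 by rewrite /tt sqr_sqrtr // ltW.
have htn : tt A p q != 0 by rewrite /tt sqrtr_eq0 -ltNge.
have c1 := cs1 u.
split.
- by rewrite -hs -[in RHS](mulr1 (ss A p ^+ 2)) -c1; ring.
- by rewrite -hr -[in RHS](mulr1 (ss A p)) -c1; ring.
- have -> : A q q = rr A p q ^+ 2 + tt A p q ^+ 2 by rewrite ht; ring.
  by rewrite -[in RHS](mulr1 (_ + _)) -c1; ring.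
- have -> : ss A p * cc u * (rr A p q * sn u + tt A p q * cc u) -
    ss A p * sn u * (rr A p q * cc u - tt A p q * sn u) =
    ss A p * tt A p q * (cc u ^+ 2 + sn u ^+ 2) by ring.
  by rewrite c1 mulr1 mulf_neq0.
Qed.

Lemma Lmat_nonneg {R : realType} {n : nat} (A : 'M[R]_n) p q (u : R) :
  0 <= u -> u <= 1 -> 0 <= A p q ->
  tt A p q * sn u <= rr A p q * cc u ->
  forall a b, 0 <= Lmat A p q u a b.
Proof.
move=> u0 u1 hpq hc a b.
have hd : 0 < 1 + u ^+ 2 by nra.
have c0 : 0 <= cc u.
  by rewrite /cc; apply: divr_ge0; [nra | exact: ltW].
have s0 : 0 <= sn u by rewrite /sn; apply: divr_ge0; [nra | exact: ltW].
have sp : 0 <= ss A p by rewrite /ss sqrtr_ge0.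
have r0 : 0 <= rr A p q by rewrite /rr divr_ge0.
have t0 : 0 <= tt A p q by rewrite /tt sqrtr_ge0.
rewrite mxE; case: (ord2 a) => ->; case: (ord2 b) => -> /=.
- exact: mulr_ge0.
- exact: mulr_ge0.
- by rewrite subr_ge0.
- by rewrite addr_ge0 // mulr_ge0.
Qed.


Lemma sq_zero {R : realType} {n k : nat} (C : 'M[R]_(n, k)) m i j (x y : R) :
  let A := C *m C^T in
  A m m - 2 * x * A m i - 2 * y * A m j + x ^+ 2 * A i i + y ^+ 2 * A j j
  + 2 * x * y * A i j = 0 ->
  forall l, C m l = x * C i l + y * C j l.
Proof.
move=> A h l; rewrite -(sumsq3 C m i j x y) -/A in h.
have := @psumr_eq0P _ _ _ _ (fun l _ => sqr_ge0 (C m l - x * C i l - y * C j l)) h l isT.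
by move/eqP; rewrite sqrf_eq0 subr_eq0 subr_eq addrC => /eqP.
Qed.

Lemma sq_ge0 {R : realType} {n k : nat} (C : 'M[R]_(n, k)) m i j (x y : R) :
  0 <= (C *m C^T) m m - 2 * x * (C *m C^T) m i - 2 * y * (C *m C^T) m j
  + x ^+ 2 * (C *m C^T) i i + y ^+ 2 * (C *m C^T) j j
  + 2 * x * y * (C *m C^T) i j.
Proof. by rewrite -sumsq3 sumr_ge0 // => l _; exact: sqr_ge0. Qed.

Lemma mmT_ge0 {R : realType} {n k : nat} (C : 'M[R]_(n, k)) a b :
  nonneg_mx C -> 0 <= (C *m C^T) a b.
Proof. by move=> h; rewrite mmT sumr_ge0 // => l _; rewrite mulr_ge0. Qed.

Lemma mmT_diag0 {R : realType} {n k : nat} (C : 'M[R]_(n, k)) a b :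
  (C *m C^T) a a = 0 -> (C *m C^T) a b = 0.
Proof.
rewrite !mmT => h.
have h2 : \sum_l C a l ^+ 2 = 0 by rewrite -[RHS]h; apply: eq_bigr => l _; rewrite expr2.
have z l : C a l = 0.
  have := @psumr_eq0P _ _ _ _ (fun l _ => sqr_ge0 (C a l)) h2 l isT.
  by move/eqP; rewrite sqrf_eq0 => /eqP.
by rewrite big1 // => l _; rewrite z mul0r.
Qed.

Lemma mmT_CS {R : realType} {n k : nat} (C : 'M[R]_(n, k)) a b :
  (C *m C^T) a b ^+ 2 <= (C *m C^T) a a * (C *m C^T) b b.
Proof.
set A := C *m C^T; have S x y : A x y = A y x by rewrite /A !mmT; apply: eq_bigr => l _; rewrite mulrC.
have haa : 0 <= A a a by rewrite /A mmT sumr_ge0 // => l _; rewrite -expr2 sqr_ge0.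
have [h0|hp] := eqVneq (A a a) 0.
  by rewrite h0 /A mmT_diag0 // expr2 mul0r mul0r.
have hp' : 0 < A a a by rewrite lt_def hp haa.
have := sq_ge0 C b a a (A a b / A a a) 0; rewrite -/A [A b a]S => h.
have : 0 <= A a a * (A b b - 2 * (A a b / A a a) * A a b - 2 * 0 * A a b +
    (A a b / A a a) ^+ 2 * A a a + 0 ^+ 2 * A a a + 2 * (A a b / A a a) * 0 * A a a).
  exact: mulr_ge0.
have -> : A a a * (A b b - 2 * (A a b / A a a) * A a b - 2 * 0 * A a b +
    (A a b / A a a) ^+ 2 * A a a + 0 ^+ 2 * A a a + 2 * (A a b / A a a) * 0 * A a a)
  = A a a * A b b - A a b ^+ 2 by field.
by rewrite subr_ge0.
Qed.

Lemma mmT_CSeq {R : realType} {n k : nat} (C : 'M[R]_(n, k)) a b :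
  let A := C *m C^T in 0 < A a a -> A a b ^+ 2 = A a a * A b b ->
  forall c, A b c = (A a b / A a a) * A a c.
Proof.
move=> A hp heq c.
have S x y : A x y = A y x by rewrite /A !mmT; apply: eq_bigr => l _; rewrite mulrC.
have hC : forall l, C b l = (A a b / A a a) * C a l + 0 * C a l.
  apply: (@sq_zero _ _ _ C b a a); rewrite -/A [A b a]S.
  have hn : A a a != 0 by rewrite gt_eqF.
  have -> : A b b = A a b ^+ 2 / A a a by rewrite heq; field.
  by field.
set x := A a b / A a a in hC *.
rewrite /A !mmT mulr_sumr; apply: eq_bigr => l _; rewrite hC; ring.
Qed.

Lemma fact_span {R : realType} {n k : nat} (A : 'M[R]_n) (C : 'M[R]_(n, k)) p q :
  A^T = A -> (\rank A <= 2)%N -> Dt A p q != 0 -> A = C *m C^T ->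
  forall m l, C m l = Xc A p q m * C p l + Yc A p q m * C q l.
Proof.
move=> HT hr hD HC m; have S := symE _ HT; have sp := @span2 _ _ A p q HT hr hD.
apply: sq_zero; rewrite -HC.
rewrite (sp m m) [A p m]S [A q m]S (sp m p) (sp m q) [A q p]S.
by set x := Xc A p q m; set y := Yc A p q m; ring.
Qed.


Lemma mul_perm_mxE {R : realType} {n k : nat} (M : 'M[R]_(n, k)) (s : 'S_k) i j :
  (M *m perm_mx s) i j = M i ((s^-1)%g j).
Proof. by rewrite -[s in perm_mx s]invgK -col_permE mxE. Qed.

Lemma indep_entries {R : realType} {n k : nat} (C : 'M[R]_(n, k)) l l' (a b : R) :
  pairwise_lin_indep_cols C -> l != l' ->
  (forall m, a * C m l + b * C m l' = 0) -> a = 0 /\ b = 0.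
Proof.
move=> hI hl h; apply: (hI _ _ hl); apply/matrixP => m z.
by rewrite !mxE h.
Qed.

Lemma sum_pos_ex {R : realType} {k : nat} (F : 'I_k -> R) :
  \sum_l F l != 0 -> exists l, F l != 0.
Proof.
case: (pickP (fun l => F l != 0)) => [l hl|h0]; first by exists l.
by rewrite big1 ?eqxx // => l _; move/negbFE/eqP: (h0 l).
Qed.

Lemma zero_case {R : realType} {n k0 : nat} (A : 'M[R]_n) (B0 : 'M[R]_(n, k0)) p q :
  A^T = A -> (\rank A <= 2)%N -> nonneg_mx B0 -> A = B0 *m B0^T ->
  p != q -> A p q = 0 -> 0 < A p p -> 0 < A q q -> unique_cp_factorization A.
Proof.
move=> HT hr hB0 HB0 pq h0 hp hq.
have S := symE _ HT.
have Age0 a b : 0 <= A a b by rewrite HB0 mmT_ge0.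
have hD : 0 < Dt A p q by rewrite /Dt h0 expr0n /= subr0 mulr_gt0.
have hD' : Dt A p q != 0 by rewrite gt_eqF.
have [e1 e2 e3 edet] := @Lmat_props _ _ A p q 0 hp hD.
set L := Lmat A p q 0 in e1 e2 e3 edet.
have hss : 0 < ss A p by rewrite /ss sqrtr_gt0.
have hrr : rr A p q = 0 by rewrite /rr h0 mul0r.
have c0 : cc (0 : R) = 1 by rewrite /cc expr0n /= subr0 addr0 divr1.
have s0 : sn (0 : R) = 0 by rewrite /sn mulr0 mul0r.
have Lnn : forall a b, 0 <= L a b.
  apply: Lmat_nonneg => //.
  by rewrite hrr s0 c0 mulr0 mul0r.
have L00 : L 0 0 = ss A p by rewrite /L mxE /= c0 mulr1.
have L01 : L 0 1 = 0 by rewrite /L mxE /= s0 mulr0.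
have L10 : L 1 0 = 0 by rewrite /L mxE /= hrr s0 mulr0 mul0r subr0.
have L11 : L 1 1 = tt A p q by rewrite /L mxE /= hrr c0 mulr1 mul0r add0r.
have hX m : 0 <= Xc A p q m.
  by rewrite /Xc h0 mulr0 subr0; apply: divr_ge0; [apply: mulr_ge0 | apply: ltW].
have hY m : 0 <= Yc A p q m.
  by rewrite /Yc h0 mulr0 subr0; apply: divr_ge0; [apply: mulr_ge0 | apply: ltW].
exists 2%N, (Bf A p q L); split.
  split; first exact: Bf_nonneg.
    exact: Bf_fact.
  exact: Bf_indep.
move=> k' C [hCn HC hCi].
have fs := @fact_span _ _ _ A C p q HT hr hD' HC.
have Ppq l : C p l * C q l = 0.
  have hs : \sum_l C p l * C q l = 0 by rewrite -(mmT C) -HC.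
  exact: (@psumr_eq0P _ _ _ _ (fun l _ => mulr_ge0 (hCn p l) (hCn q l)) hs l isT).
have [l1 hl1] : exists l, C p l != 0.
  have := @sum_pos_ex _ _ (fun l => C p l * C p l).
  rewrite -(mmT C) -HC gt_eqF // => /(_ isT) [l hl]; exists l.
  by move: hl; rewrite mulf_eq0 orbb.
have [l2 hl2] : exists l, C q l != 0.
  have := @sum_pos_ex _ _ (fun l => C q l * C q l).
  rewrite -(mmT C) -HC gt_eqF // => /(_ isT) [l hl]; exists l.
  by move: hl; rewrite mulf_eq0 orbb.
have hq1 : C q l1 = 0.
  by move/eqP: (Ppq l1); rewrite mulf_eq0 (negbTE hl1) /= => /eqP.
have hp2 : C p l2 = 0.
  by move/eqP: (Ppq l2); rewrite mulf_eq0 (negbTE hl2) orbF => /eqP.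
have l12 : l1 != l2 by apply: contraNneq hl2 => <-; rewrite hq1.
have hall l : l = l1 \/ l = l2.
  have [->|n1] := eqVneq l l1; first by left.
  have [->|n2] := eqVneq l l2; first by right.
  exfalso.
  have [hpl|hpl] := eqVneq (C p l) 0; last first.
    have hql : C q l = 0 by move/eqP: (Ppq l); rewrite mulf_eq0 (negbTE hpl) /= => /eqP.
    have [] := @indep_entries _ _ _ C l l1 (C p l1) (- C p l) hCi n1.
      by move=> m; rewrite (fs m l) (fs m l1) hql hq1; ring.
    by move=> /eqP; rewrite (negbTE hl1).
  have [hql|hql] := eqVneq (C q l) 0; last first.
    have [] := @indep_entries _ _ _ C l l2 (C q l2) (- C q l) hCi n2.
      by move=> m; rewrite (fs m l) (fs m l2) hpl hp2; ring.
    by move=> /eqP; rewrite (negbTE hl2).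
  have [] := @indep_entries _ _ _ C l l1 1 0 hCi n1.
    by move=> m; rewrite (fs m l) hpl hql; ring.
  by move=> /eqP; rewrite oner_eq0.
have ek : k' = 2%N.
  apply/eqP; rewrite eqn_leq; apply/andP; split.
    have c2 : #|[set l1; l2]| = 2%N by rewrite cards2 l12.
    rewrite -[k' in (k' <= _)%N]card_ord -c2.
    apply: subset_leq_card; apply/subsetP => l _; rewrite !inE.
    by case: (hall l) => ->; rewrite eqxx ?orbT.
  by rewrite -[k' in (_ <= k')%N]card_ord; apply/card_gt1P; exists l1, l2.
subst k'.
have Spp : A p p = C p 0 ^+ 2 + C p 1 ^+ 2 by rewrite HC mmT sum2 !expr2.
have Sqq : A q q = C q 0 ^+ 2 + C q 1 ^+ 2 by rewrite HC mmT sum2 !expr2.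
have sqE (x : R) : 0 <= x -> Num.sqrt (x ^+ 2) = x by move=> hx; rewrite sqrtr_sqr ger0_norm.
have ttE : tt A p q = Num.sqrt (A q q) by rewrite /tt hrr expr0n /= subr0.
exists erefl.
case: (ord2 l1) hl1 hq1 l12 => El1; case: (ord2 l2) hl2 hp2 => El2;
  rewrite El1 El2 // => hl2' hp2' hl1' hq1' _.
- exists 1%:M; split; first exact: is_perm_mx1.
  rewrite castmx_id mulmx1; apply/matrixP => m z; rewrite (fs m z) mxE.
  have Cp0 : C p 0 = ss A p by rewrite /ss Spp hp2' expr0n /= addr0 sqE.
  have Cq1 : C q 1 = tt A p q by rewrite ttE Sqq hq1' expr0n /= add0r sqE.
  case: (ord2 z) => ->; rewrite ?L00 ?L01 ?L10 ?L11 ?Cp0 ?Cq1 ?hp2' ?hq1'; ring.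
- exists (perm_mx (tperm 0 1)); split; first exact: perm_mx_is_perm.
  rewrite castmx_id; apply/matrixP => m z; rewrite mul_perm_mxE tpermV (fs m z) mxE.
  have Cp1 : C p 1 = ss A p by rewrite /ss Spp hp2' expr0n /= add0r sqE.
  have Cq0 : C q 0 = tt A p q by rewrite ttE Sqq hq1' expr0n /= addr0 sqE.
  case: (ord2 z) => ->; rewrite ?tpermL ?tpermR /= ?L00 ?L01 ?L10 ?L11 ?Cp1 ?Cq0 ?hp2' ?hq1'; ring.
Qed.


Lemma coef_ineq {R : realType} (x y z Q M : R) :
  0 <= x -> 0 <= y -> 0 <= z -> 0 <= Q -> 0 <= M ->
  z ^+ 2 * M <= x ^+ 2 * Q -> y ^+ 2 <= M * Q -> y * z <= x * Q.
Proof.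
move=> hx hy hz hQ hM h1 h2.
have s1 : (y * z) ^+ 2 <= (x * Q) ^+ 2.
  have e1 : (y * z) ^+ 2 = y ^+ 2 * z ^+ 2 by ring.
  have e2 : (x * Q) ^+ 2 = Q * (x ^+ 2 * Q) by ring.
  rewrite e1 e2; apply: (le_trans (y := (M * Q) * z ^+ 2)).
    by apply: ler_wpM2r => //; exact: sqr_ge0.
  have -> : M * Q * z ^+ 2 = Q * (z ^+ 2 * M) by ring.
  exact: ler_wpM2l.
have h3 : 0 <= x * Q by exact: mulr_ge0.
have h4 : 0 <= y * z by exact: mulr_ge0.
nra.
Qed.

Lemma frac_le {R : realType} (a b c d : R) : 0 < b -> 0 < d -> a / b <= c / d ->
  a * d <= c * b.
Proof.
move=> hb hd h.
have -> : a * d = (a / b) * (b * d) by field; rewrite gt_eqF.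
have -> : c * b = (c / d) * (b * d) by field; rewrite gt_eqF.
by apply: ler_wpM2r => //; rewrite ltW // mulr_gt0.
Qed.

Lemma rot_ok {R : realType} (r t u : R) : 0 < r -> 0 < t -> 0 <= u ->
  u * (4 * (t + r)) <= r -> t * sn u <= r * cc u.
Proof.
move=> hr ht hu h.
have hd : 0 < 1 + u ^+ 2 by nra.
rewrite /sn /cc !mulrA ler_pdivrMr // divfK ?gt_eqF //.
have hu4 : u <= 1 / 4 by nra.
nra.
Qed.

Lemma cc_gt {R : realType} (u : R) : 0 <= u -> u <= 1 / 4 -> 1 / 2 < cc u.
Proof.
move=> h0 h1; have hd : 0 < 1 + u ^+ 2 by nra.
rewrite /cc ltr_pdivlMr //; nra.
Qed.

Lemma sn_le {R : realType} (u : R) : 0 <= u -> u <= 1 / 4 -> sn u <= 1 / 2.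
Proof.
move=> h0 h1; have hd : 0 < 1 + u ^+ 2 by nra.
rewrite /sn ler_pdivrMr //; nra.
Qed.

Lemma cc_inj {R : realType} (u v : R) : 0 <= u -> 0 <= v -> cc u = cc v -> u = v.
Proof.
move=> hu hv; have hd : 0 < 1 + u ^+ 2 by nra.
have hd' : 0 < 1 + v ^+ 2 by nra.
move=> h.
have e1 : (1 - u ^+ 2) * (1 + v ^+ 2) = cc u * ((1 + u ^+ 2) * (1 + v ^+ 2)).
  by rewrite /cc; field; rewrite gt_eqF.
have e2 : (1 - v ^+ 2) * (1 + u ^+ 2) = cc v * ((1 + u ^+ 2) * (1 + v ^+ 2)).
  by rewrite /cc; field; rewrite gt_eqF.
rewrite h -e2 in e1.
have : u ^+ 2 = v ^+ 2 by nra.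
move/eqP; rewrite eqf_sqr => /orP[/eqP //|/eqP h2]; nra.
Qed.

Lemma pos_case {R : realType} {n k0 : nat} (A : 'M[R]_n) (B0 : 'M[R]_(n, k0)) :
  A^T = A -> \rank A = 2%N -> nonneg_mx B0 -> A = B0 *m B0^T ->
  (forall i j : 'I_n, i != j -> A i j != 0) ->
  exists f : nat -> 'M[R]_(n, 2),
    (forall m, minimal_cp_factorization A (f m)) /\
    (forall m1 m2 (s : 'S_2), m1 <> m2 -> f m2 <> f m1 *m perm_mx s).
Proof.
move=> HT hr hB0 HB0 hoff.
have S := symE _ HT; have hr2 : (\rank A <= 2)%N by rewrite hr.
have n2 : (1 < n)%N by have := rank_leq_row A; rewrite hr.
pose i0 : 'I_n := Ordinal (ltnW n2); pose i1 : 'I_n := Ordinal n2.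
have i01 : i0 != i1 by [].
have Age0 a b : 0 <= A a b by rewrite HB0 mmT_ge0.
have CS a b : A a b ^+ 2 <= A a a * A b b by rewrite HB0; exact: mmT_CS.
have Adiag a : 0 < A a a.
  pose b := if a == i0 then i1 else i0.
  have hab : a != b by rewrite /b; case: (eqVneq a i0) => [->|h]; rewrite ?eqxx // (negbTE h).
  rewrite lt_def Age0 andbT; apply/negP => /eqP h0.
  by have := hoff a b hab; rewrite HB0 mmT_diag0 -?HB0 ?eqxx.
have Apos a b : 0 < A a b.
  by case: (eqVneq a b) => [->|hab]; [exact: Adiag | rewrite lt_def hoff // Age0].
pose F (pr : 'I_n * 'I_n) := A pr.1 pr.2 ^+ 2 / (A pr.1 pr.1 * A pr.2 pr.2).
pose P := [pred pr : 'I_n * 'I_n | pr.1 != pr.2].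
case: (@real_arg_minP R _ (i0, i1) P F i01 (fun _ _ => num_real _)) => [[p q] /= pq hmin].
have Dpos : 0 < Dt A p q.
  have Dge : 0 <= Dt A p q by rewrite /Dt subr_ge0 CS.
  rewrite lt_def Dge andbT; apply/negP => /eqP D0.
  have eq1 : A p q ^+ 2 = A p p * A q q.
    by move: D0; rewrite /Dt => /eqP; rewrite subr_eq0 => /eqP.
  have hpq0 : A p p * A q q != 0 by rewrite mulf_neq0 // gt_eqF.
  have Fpq : F (p, q) = 1 by rewrite /F /= eq1 divff.
  have Arow m c : A m c = (A p m / A p p) * A p c.
    case: (eqVneq m p) => [->|hmp]; first by rewrite divff ?mul1r // gt_eqF.
    have hm : F (p, q) <= F (p, m) by apply: hmin; rewrite /P /= eq_sym.
    rewrite Fpq /F /= ler_pdivlMr ?mul1r ?mulr_gt0 // in hm.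
    have heq : A p m ^+ 2 = A p p * A m m by apply/eqP; rewrite eq_le CS hm.
    have h := @mmT_CSeq _ _ _ B0 p m; cbv zeta in h; rewrite -HB0 in h.
    exact: h.
  have Aeq : A = (\col_m (A p m / A p p)) *m row p A.
    by apply/matrixP => m c; rewrite mxE big_ord1 !mxE Arow.
  have : (\rank A <= 1)%N.
    by rewrite Aeq (leq_trans (mxrankM_maxr _ _)) // rank_leq_row.
  by rewrite hr.
have hD' : Dt A p q != 0 by rewrite gt_eqF.
have hX m : 0 <= Xc A p q m.
  rewrite /Xc; apply: divr_ge0 (ltW Dpos); rewrite subr_ge0.
  case: (eqVneq m p) => [->|hmp]; first by rewrite -expr2 CS.
  have hm : F (p, q) <= F (m, p) by apply: hmin; rewrite /P /= hmp.
  rewrite /F /= in hm.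
  have := frac_le _ _ _ _ (mulr_gt0 (Adiag p) (Adiag q)) (mulr_gt0 (Adiag m) (Adiag p)) hm.
  move=> h.
  have h' : A p q ^+ 2 * A m m <= A m p ^+ 2 * A q q.
    rewrite -(ler_pM2l (Adiag p)).
    have -> : A p p * (A p q ^+ 2 * A m m) = A p q ^+ 2 * (A m m * A p p) by ring.
    have -> : A p p * (A m p ^+ 2 * A q q) = A m p ^+ 2 * (A p p * A q q) by ring.
    exact: h.
  exact: (coef_ineq _ _ _ _ _ (Age0 _ _) (Age0 _ _) (Age0 _ _) (Age0 _ _) (Age0 _ _) h' (CS _ _)).
have hY m : 0 <= Yc A p q m.
  rewrite /Yc; apply: divr_ge0 (ltW Dpos); rewrite subr_ge0.
  case: (eqVneq m q) => [->|hmq]; first by rewrite [A q p]S -expr2 [A q q * _]mulrC CS.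
  have hm : F (p, q) <= F (m, q) by apply: hmin; rewrite /P /= hmq.
  rewrite /F /= in hm.
  have := frac_le _ _ _ _ (mulr_gt0 (Adiag p) (Adiag q)) (mulr_gt0 (Adiag m) (Adiag q)) hm.
  move=> h.
  have h' : A p q ^+ 2 * A m m <= A m q ^+ 2 * A p p.
    rewrite -(ler_pM2l (Adiag q)).
    have -> : A q q * (A p q ^+ 2 * A m m) = A p q ^+ 2 * (A m m * A q q) by ring.
    have -> : A q q * (A m q ^+ 2 * A p p) = A m q ^+ 2 * (A p p * A q q) by ring.
    exact: h.
  exact: (coef_ineq _ _ _ _ _ (Age0 _ _) (Age0 _ _) (Age0 _ _) (Age0 _ _) (Age0 _ _) h' (CS _ _)).
have hss : 0 < ss A p by rewrite /ss sqrtr_gt0.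
have hrr : 0 < rr A p q by rewrite /rr divr_gt0.
have htt : 0 < tt A p q.
  rewrite /tt sqrtr_gt0.
  have hs : ss A p ^+ 2 = A p p by rewrite /ss sqr_sqrtr // ltW.
  have -> : A q q - rr A p q ^+ 2 = Dt A p q / A p p.
    by rewrite /rr /Dt -hs; field; rewrite gt_eqF.
  by rewrite divr_gt0.
pose del := rr A p q / (4 * (tt A p q + rr A p q)).
have hdel : 0 < del by rewrite divr_gt0 // mulr_gt0 // addr_gt0.
pose u (k : nat) := del / (k.+1)%:R.
have hu0 k : 0 <= u k by rewrite /u divr_ge0 // ltW.
have hub k : u k * (4 * (tt A p q + rr A p q)) <= rr A p q.
  have h4 : 0 < 4 * (tt A p q + rr A p q) by rewrite mulr_gt0 // addr_gt0.
  rewrite /u /del.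
  have -> : rr A p q / (4 * (tt A p q + rr A p q)) / k.+1%:R * (4 * (tt A p q + rr A p q))
     = rr A p q / k.+1%:R.
    have hk : 0 <= k%:R :> R by exact: ler0n.
    field; apply/andP; split; rewrite gt_eqF //; lra.
  rewrite ler_pdivrMr ?ltr0Sn // -natr1.
  have hk : 0 <= k%:R :> R by exact: ler0n.
  nra.
have hu4 k : u k <= 1 / 4.
  have := hub k; have := hu0 k; nra.
have hu1 k : u k <= 1 by apply: (le_trans (hu4 k)); rewrite ler_pdivrMr //; lra.
pose f k := Bf A p q (Lmat A p q (u k)).
have [xp yp _ _] := @XYpq _ _ A p q HT hD'.
exists f; split.
  move=> k; have [e1 e2 e3 edet] := @Lmat_props _ _ A p q (u k) (Adiag p) Dpos.
  split.
    split.
    - apply: Bf_nonneg => //; apply: Lmat_nonneg;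
        [exact: hu0 | exact: hu1 | exact: Age0 | exact: rot_ok].
    - exact: Bf_fact.
    - exact: Bf_indep.
  move=> k' C hk' _ HA.
  have : (\rank A <= k')%N.
    by rewrite HA (leq_trans (mxrankM_maxl _ _)) // rank_leq_col.
  by rewrite hr => /leq_trans/(_ hk').
move=> m1 m2 s hne heq.
have E := congr1 (fun M : 'M[R]_(n, 2) => M p 0) heq.
rewrite /= mul_perm_mxE /f !mxE xp yp !mul1r !mul0r !addr0 in E.
have hsn : ss A p != 0 by rewrite gt_eqF.
case: (ord2 ((s^-1)%g 0)) E => -> /= E.
  have := mulfI hsn E => /(cc_inj _ _ (hu0 _) (hu0 _)).
  rewrite /u => /eqP; rewrite eqr_div ?pnatr_eq0 // => /eqP /(mulfI (lt0r_neq0 hdel)) /eqP.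
  by rewrite eqr_nat eqSS => /eqP h; apply: hne.
have := mulfI hsn E => hE.
have := @cc_gt _ _ (hu0 m2) (hu4 m2); rewrite hE => h.
have := @sn_le _ _ (hu0 m1) (hu4 m1); rewrite leNgt h.
done.
Qed.


Theorem corollary3p2 (R : realType) (n : nat) (A : 'M[R]_n) :
  A^T = A -> completely_positive A -> irreducible_mx A -> \rank A = 2%N ->
  (unique_cp_factorization A <->
     exists i j : 'I_n, [/\ i != j, A i j = 0, row i A != 0 & col j A != 0])
  /\
  ((forall i j : 'I_n, i != j -> A i j != 0) -> infinitely_many_minimal_cp A).
Proof.
move=> HT [k0 [B0 [hB0 HB0]]] hirr hr.
have S := symE _ HT; have hr2 : (\rank A <= 2)%N by rewrite hr.
have n2 : (1 < n)%N by have := rank_leq_row A; rewrite hr.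
pose i0 : 'I_n := Ordinal (ltnW n2); pose i1 : 'I_n := Ordinal n2.
have Age0 a b : 0 <= A a b by rewrite HB0 mmT_ge0.
have rowE i : row i A != 0 -> 0 < A i i.
  move=> hrow; rewrite lt_def Age0 andbT; apply: contra hrow => /eqP h.
  apply/eqP/rowP => c; rewrite !mxE HB0; apply: mmT_diag0; rewrite -HB0; exact: h.
have colE j : col j A != 0 -> row j A != 0.
  apply: contra => /eqP h; apply/eqP/colP => m; rewrite !mxE S.
  by have := congr1 (fun M : 'M[R]_(1, n) => M 0 m) h; rewrite !mxE => ->.
have rownz i : row i A != 0.
  pose j := if i == i0 then i1 else i0.
  have hij : i != j by rewrite /j; case: (eqVneq i i0) => [->|h]; rewrite ?eqxx // (negbTE h).
  case/connectP: (hirr i j) => [[|x s] /= hp hl]; first by rewrite hl eqxx in hij.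
  case/andP: hp => /andP [_ hx] _.
  apply: contraNneq hx => h.
  by have := congr1 (fun M : 'M[R]_(1, n) => M 0 x) h; rewrite !mxE => ->.
have colnz j : col j A != 0.
  apply: contraNneq (rownz j) => h; apply/eqP/rowP => m; rewrite !mxE S.
  by have := congr1 (fun M : 'M[R]_(n, 1) => M m 0) h; rewrite !mxE => ->.
have noinf : (forall i j : 'I_n, i != j -> A i j != 0) ->
  exists f : nat -> 'M[R]_(n, 2),
    (forall m, minimal_cp_factorization A (f m)) /\
    (forall m1 m2 (s : 'S_2), m1 <> m2 -> f m2 <> f m1 *m perm_mx s).
  exact: (@pos_case _ _ _ A B0 HT hr hB0 HB0).
split; last first.
  move=> hoff; have [f [hmin hdist]] := noinf hoff.
  exists 2%N, f; split => // m1 m2 hne [e [P [hP E]]].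
  rewrite castmx_id in E; case/is_perm_mxP: hP => s Es.
  by apply: (hdist m1 m2 s hne); rewrite E Es.
split.
  move=> [k [B [hB hall]]].
  apply: NNPP => hno.
  have hoff : forall i j : 'I_n, i != j -> A i j != 0.
    move=> i j hij; apply/negP => /eqP h0; apply: hno.
    by exists i, j; split.
  have [f [hmin hdist]] := noinf hoff.
  have [e0 [P0 [hP0 E0]]] := hall _ _ (hmin 0%N).1.
  have [e1 [P1 [hP1 E1]]] := hall _ _ (hmin 1%N).1.
  subst k; rewrite castmx_id in E0; rewrite castmx_id in E1.
  case/is_perm_mxP: hP0 => s0 Es0; case/is_perm_mxP: hP1 => s1 Es1.
  apply: (hdist 0%N 1%N ((s0^-1) * s1)%g) => //.
  by rewrite E0 E1 Es0 Es1 -mulmxA -perm_mxM mulgA mulgV mul1g.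
move=> [i [j [hij h0 hri hcj]]].
apply: (@zero_case _ _ _ A B0 i j HT hr2 hB0 HB0 hij h0); first exact: rowE.
exact/rowE/colE.
Qed.
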